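(* Let $p\geq 1$ and $0\leq k<p$ be integers and let $\sigma=\mathrm{ReLU}^p$. For each $N\geq 1$, let $w_1,\dots,w_N\in\{1,-1\}$ and let $\mathbf{b}=(b_1,\dots,b_N)\in\mathbb{R}^N$ be quasi-evenly spaced on $[-1,1]$, i.e. $b_n=-1+2(n-1)/N+o(N^{-1})$ for $n=1,\dots,N$ (uniformly in $n$ as $N\to\infty$). Let $\mathbf{G}^{(k)}_\sigma\in\mathbb{R}^{N\times N}$ be the matrix with entries $$[\mathbf{G}^{(k)}_\sigma]_{i,j}=\int_{-1}^1 w_i^k w_j^k\,\sigma^{(k)}(w_ix-b_i)\,\sigma^{(k)}(w_jx-b_j)\,dx,\qquad i,j=1,\dots,N,$$ with eigenvalues $\lambda^{(k)}_1\geq\cdots\geq\lambda^{(k)}_N\geq 0$, and let $\kappa(\mathbf{G}^{(k)}_\sigma)=\lambda^{(k)}_1/\lambda^{(k)}_N$. Then $\kappa(\mathbf{G}^{(k)}_\sigma)=\Omega(N^{1+2(p-k)})$ as $N\to\infty$; that is, there exists a constant $C>0$ such that $\kappa(\mathbf{G}^{(k)}_\sigma)\geq C N^{1+2(p-k)}$ for all sufficiently large $N$.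
   Context: $\mathrm{ReLU}^p(z)=(\max\{0,z\})^p$ and $\sigma^{(k)}$ denotes the $k$-th derivative of $\sigma$ (so $\sigma^{(k)}(z)=\frac{p!}{(p-k)!}\mathrm{ReLU}^{p-k}(z)$ for $k<p$). *)

(* Defs.v *)
From HB Require Import structures.
From mathcomp Require Import all_boot all_order all_algebra.
From mathcomp Require Import all_classical all_reals all_analysis.
Set Implicit Arguments. Unset Strict Implicit. Unset Printing Implicit Defensive.
Import Order.TTheory GRing.Theory Num.Theory.
Import numFieldNormedType.Exports.
Local Open Scope classical_set_scope.
Local Open Scope ring_scope.

Section Defs.
Variable R : realType.

Definition reluP (p : nat) (z : R) : R := (Num.max 0 z) ^+ p.

(* k-th derivative of sigma = ReLU^p, for k < p:
   sigma^(k)(z) = p!/(p-k)! * ReLU^(p-k)(z)  (formula from the context). *)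
Definition dsigma (p k : nat) (z : R) : R :=
  (p`!%:R / (p - k)`!%:R) * reluP (p - k) z.

Definition gram (p k N : nat) (w b : 'I_N -> R) : 'M[R]_N :=
  \matrix_(i < N, j < N)
    \int[lebesgue_measure]_(x in `[-1, 1]%classic)
      (w i ^+ k * w j ^+ k * dsigma p k (w i * x - b i) * dsigma p k (w j * x - b j)).

Definition lambda_max (N : nat) (A : 'M[R]_N) : R := sup [set a : R | eigenvalue A a].
Definition lambda_min (N : nat) (A : 'M[R]_N) : R := inf [set a : R | eigenvalue A a].

Definition cond_number (N : nat) (A : 'M[R]_N) : \bar R :=
  if lambda_min A == 0 then +oo%E else (lambda_max A / lambda_min A)%:E.

End Defs.

(* Main.v *)
Require Import Defs.
From HB Require Import structures.
From mathcomp Require Import all_boot all_order all_algebra.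
From mathcomp Require Import all_classical all_reals all_analysis.
From mathcomp Require Import complex.
From mathcomp Require Import ring lra.
Import Order.TTheory GRing.Theory Num.Theory.
Import numFieldNormedType.Exports.
Local Open Scope classical_set_scope.
Local Open Scope ring_scope.

Section Spec.
Variable R : realType.
Local Notation C := (R[i]).
Local Notation f := (real_complex R).

Lemma ReD (x y : C) : complex.Re (x + y) = complex.Re x + complex.Re y.
Proof. by case: x; case: y. Qed.

Lemma Re_sum n (F : 'I_n -> C) : complex.Re (\sum_i F i) = \sum_i complex.Re (F i).
Proof.
apply: (big_morph (@complex.Re R)); [exact: ReD | by []].
Qed.

Lemma Re_f (x : R) : complex.Re (f x) = x.
Proof. by []. Qed.

Lemma f_real (x : R) : f x \is Num.real.
Proof.
rewrite realE !lecE /= eqxx /=.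
by case: (lerP 0 x) => h //=; rewrite ltW.
Qed.

Lemma conj_f (x : R) : Num.conj (f x) = f x.
Proof. by apply/CrealP; exact: f_real. Qed.

Lemma normsq_real (y : C) : exists2 s : R, 0 <= s & y * Num.conj y = f s.
Proof.
have h : 0 <= y * Num.conj y by rewrite -normCK exprn_ge0.
move: h; rewrite lecE /= => /andP [/eqP him hre].
exists (complex.Re (y * Num.conj y)) => //.
by move: him hre; case: (y * Num.conj y) => a b /= -> _.
Qed.

Lemma eig_transfer n (G : 'M[R]_n) (r : R) :
  eigenvalue (map_mx f G) (f r) -> eigenvalue G r.
Proof.
by rewrite !eigenvalue_root_char -map_char_poly fmorph_root.
Qed.

Lemma real_rayleigh n (G : 'M[R]_n) (hs : G^T = G) (u : 'rV[R]_n) (hu : u != 0) :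
  (exists a, eigenvalue G a /\ a * (u *m u^T) 0 0 <= (u *m G *m u^T) 0 0) /\
  (exists a, eigenvalue G a /\ (u *m G *m u^T) 0 0 <= a * (u *m u^T) 0 0).
Proof.
set Gc := map_mx f G; set uc := map_mx f u.
have herm : Gc \is hermsymmx.
  apply: realsym_hermsym.
    apply/is_hermitianmxP; rewrite expr0 scale1r map_mx_id // /Gc.
    by apply/matrixP => i j; rewrite !mxE -{1}hs mxE.
  by apply/mxOverP => i j; rewrite mxE f_real.
set P := spectralmx Gc; set d := spectral_diag Gc.
have hA : Gc = invmx P *m diag_mx d *m P.
  by apply/orthomx_spectralP; exact: hermitian_normalmx.
have Pu : P \in unitmx by exact: spectral_unit.
have hinv : invmx P = (P ^t*)%sesqui by apply: invmx_unitary; exact: spectral_unitarymx.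
have dreal : forall i, d 0 i = f (complex.Re (d 0 i)).
  move=> i; rewrite RRe_real //.
  by have /mxOverP := hermitian_spectral_diag_real herm; apply.
set r := fun i => complex.Re (d 0 i).
have eig : forall i, eigenvalue G (r i).
  move=> i; apply: eig_transfer; rewrite /r -dreal.
  apply/eigenvalueP; exists (delta_mx 0 i *m P).
    rewrite -/Gc hA !mulmxA -(mulmxA _ P) mulmxV // mulmx1.
    by rewrite -[delta_mx 0 i *m diag_mx d]rowE row_diag_mx scalemxAl.
  apply/negP => /eqP h0.
  have := congr1 (fun M => (M *m invmx P) 0 i) h0.
  rewrite /= -mulmxA mulmxV // mulmx1 mul0mx !mxE !eqxx /=.
  by move/eqP; rewrite oner_eq0.
set y := uc *m invmx P.
have hy : forall i, y 0 i = \sum_j uc 0 j * Num.conj (P i j).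
  by move=> i; rewrite /y hinv mxE; apply: eq_bigr => j _; rewrite !mxE.
have hs_i : forall i, exists2 s : R, 0 <= s & y 0 i * Num.conj (y 0 i) = f s.
  move=> i; exact: normsq_real.
pose s := fun i => complex.Re (y 0 i * Num.conj (y 0 i)).
have hsf : forall i, y 0 i * Num.conj (y 0 i) = f (s i).
  by move=> i; rewrite /s; case: (hs_i i) => t _ ->.
have s0 : forall i, 0 <= s i.
  by move=> i; rewrite /s; case: (hs_i i) => t t0 ->.
have hz : forall i, (P *m uc^T) i 0 = Num.conj (y 0 i).
  move=> i; rewrite hy rmorph_sum mxE; apply: eq_bigr => j _.
  by rewrite rmorphM /= conjCK !mxE conj_f mulrC.
have qE : (u *m G *m u^T) 0 0 = \sum_i r i * s i.
  have : f ((u *m G *m u^T) 0 0) = \sum_i f (r i * s i).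
    have -> : f ((u *m G *m u^T) 0 0) = (map_mx f (u *m G *m u^T)) 0 0.
      by rewrite [RHS]mxE.
    rewrite !map_mxM -map_trmx -/uc -/Gc hA.
    rewrite !mulmxA -(mulmxA _ P) -/y -mulmxA mxE; apply: eq_bigr => i _.
    rewrite mul_diag_mx mxE hz rmorphM /= -hsf {1}(dreal i) /r; ring.
  by rewrite -rmorph_sum => /(congr1 (@complex.Re R)); rewrite !Re_f.
have nE : (u *m u^T) 0 0 = \sum_i s i.
  have : f ((u *m u^T) 0 0) = \sum_i f (s i).
    have -> : f ((u *m u^T) 0 0) = (map_mx f (u *m u^T)) 0 0.
      by rewrite [RHS]mxE.
    rewrite !map_mxM -map_trmx -/uc.
    rewrite -[uc in uc *m _](mulmx1 uc) -(mulVmx Pu) mulmxA -/y -mulmxA mxE.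
    by apply: eq_bigr => i _; rewrite hz hsf.
  by rewrite -rmorph_sum => /(congr1 (@complex.Re R)); rewrite !Re_f.
have [i0 _] : exists i : 'I_n, u 0 i != 0.
  case: (pselect (exists i : 'I_n, u 0 i != 0)) => // H; exfalso.
  move/negP: hu; apply; apply/eqP/rowP => i; rewrite mxE; apply/eqP.
  by apply/negPn/negP => hi; apply: H; exists i.
split.
  case: (arg_minP r (P:=xpredT) (i0:=i0) isT) => i _ Hi.
  exists (r i); split => //; rewrite qE nE mulr_sumr; apply: ler_sum => j _.
  by apply: ler_wpM2r => //; apply: Hi.
case: (arg_maxP r (P:=xpredT) (i0:=i0) isT) => i _ Hi.
exists (r i); split => //; rewrite qE nE mulr_sumr; apply: ler_sum => j _.
by apply: ler_wpM2r => //; apply: Hi.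
Qed.

Lemma sq_le_sum n (v : 'rV[R]_n) i : v 0 i ^+ 2 <= \sum_j v 0 j ^+ 2.
Proof.
rewrite (bigD1 i) //= lerDl; apply: sumr_ge0 => j _; exact: sqr_ge0.
Qed.

Lemma eig_props n (G : 'M[R]_n) (psd : forall u : 'rV_n, 0 <= (u *m G *m u^T) 0 0) a :
  eigenvalue G a -> 0 <= a /\ a <= \sum_i \sum_j `|G i j|.
Proof.
case/eigenvalueP => v hv v0.
have q : (v *m G *m v^T) 0 0 = a * (v *m v^T) 0 0 by rewrite hv -scalemxAl mxE.
have nE : (v *m v^T) 0 0 = \sum_i v 0 i ^+ 2.
  by rewrite mxE; apply: eq_bigr => i _; rewrite mxE expr2.
have [i0 hi0] : exists i, v 0 i != 0.
  case: (pselect (exists i, v 0 i != 0)) => // H; exfalso.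
  move/negP: v0; apply; apply/eqP/rowP => i; rewrite mxE; apply/eqP.
  by apply/negPn/negP => hi; apply: H; exists i.
have npos : 0 < (v *m v^T) 0 0.
  rewrite nE; apply: (@lt_le_trans _ _ (v 0 i0 ^+ 2)); last exact: sq_le_sum.
  by rewrite lt_def sqr_ge0 sqrf_eq0 hi0 andbT.
split; first by have := psd v; rewrite q pmulr_lge0.
rewrite -(ler_pM2r npos) -q.
rewrite mxE; under eq_bigr do rewrite !mxE.
rewrite exchange_big mulr_suml /=.
apply: le_trans (ler_norm _) _.
apply: le_trans (ler_norm_sum _ _ _) _; apply: ler_sum => j _.
rewrite mulr_suml mulr_suml.
apply: le_trans (ler_norm_sum _ _ _) _; apply: ler_sum => k _.
rewrite !normrM [`|v 0 k| * _]mulrC -mulrA; apply: ler_wpM2l; first exact: normr_ge0.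
have h1 := sq_le_sum _ v k; have h2 := sq_le_sum _ v j; rewrite -nE in h1 h2.
have e1 : `|v 0 k| ^+ 2 = v 0 k ^+ 2 by rewrite real_normK ?num_real.
have e2 : `|v 0 j| ^+ 2 = v 0 j ^+ 2 by rewrite real_normK ?num_real.
have := sqr_ge0 (`|v 0 k| - `|v 0 j|).
move: (normr_ge0 (v 0 k)) (normr_ge0 (v 0 j)) e1 e2 h1 h2.
set p := `|v 0 k|; set q' := `|v 0 j|; set N := (v *m v^T) 0 0.
move=> *; nra.
Qed.
End Spec.

Lemma kernel_exists (F : fieldType) m n (M : 'M[F]_(m, n)) : (n < m)%N ->
  exists2 g : 'rV_m, g != 0 & g *m M = 0.
Proof.
move=> hnm.
have hk : kermx M != 0.
  rewrite -mxrank_eq0 mxrank_ker subn_eq0 -ltnNge.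
  exact: leq_ltn_trans (rank_leq_col M) hnm.
have [i hi] : exists i, row i (kermx M) != 0.
  case: (pselect (exists i, row i (kermx M) != 0)) => // H; exfalso.
  move/negP: hk; apply; apply/eqP/row_matrixP => i; rewrite row0.
  by apply/eqP/negPn/negP => hi; apply: H; exists i.
by exists (row i (kermx M)) => //; rewrite -row_mul mulmx_ker row0.
Qed.

Section Mom.
Variable R : realType.
Lemma m1_neq : ((-1 : R) == 1) = false.
Proof. by apply/negbTE/negP => /eqP h; lra. Qed.

Lemma relu_bound m (z : R) : 0 <= reluP m z <= `|z| ^+ m.
Proof.
rewrite /reluP; apply/andP; split; first by rewrite exprn_ge0 // le_max lexx.
apply: lerXn2r; rewrite ?nnegrE ?le_max ?lexx ?normr_ge0 //.
by rewrite ge_max normr_ge0 ler_norm.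
Qed.

Lemma moment_vec m (hm : (0 < m)%N) (ww bb : 'I_(m.+1 + m.+1).+1 -> R) (del : R)
  (hw : forall i, ww i = 1 \/ ww i = -1) (hb : forall i, `|bb i| <= del) :
  exists beta : 'rV[R]_(m.+1 + m.+1).+1,
    (exists i, `|beta 0 i| = 1) /\ (forall i, `|beta 0 i| <= 1) /\
    (forall x, del < `|x| -> \sum_i beta 0 i * reluP m (ww i * x - bb i) = 0) /\
    (forall x, `|x| <= del -> `|\sum_i beta 0 i * reluP m (ww i * x - bb i)|
                   <= (m.+1 + m.+1).+1%:R * (2 * del) ^+ m).
Proof.
set K := (m.+1 + m.+1).+1.
pose A : 'M[R]_(K, m.+1) := \matrix_(i, j) ((ww i == 1)%:R * bb i ^+ j).
pose B : 'M[R]_(K, m.+1) := \matrix_(i, j) ((ww i != 1)%:R * bb i ^+ j).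
have [g g0 hg] := @kernel_exists R K _ (row_mx A B) (ltnSn _).
have [i0 _] : exists i : 'I_K, true by exists ord0.
case: (arg_maxP (fun i => `|g 0 i|) (P:=xpredT) (i0:=i0) isT) => i1 _ Hi1.
have t0 : 0 < `|g 0 i1|.
  rewrite normr_gt0; apply: contraNneq g0 => h; apply/eqP/rowP => j; rewrite mxE.
  by apply/eqP; rewrite -normr_eq0 eq_le normr_ge0 andbT; move: (Hi1 j isT); rewrite h normr0.
set beta := `|g 0 i1|^-1 *: g.
have bE : forall i, beta 0 i = `|g 0 i1|^-1 * g 0 i by move=> i; rewrite mxE.
have hAB : beta *m A = 0 /\ beta *m B = 0.
  move: hg; rewrite mul_mx_row => /eqP; rewrite row_mx_eq0 => /andP [/eqP h1 /eqP h2].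
  by rewrite /beta -!scalemxAl h1 h2 !scaler0.
have mom : forall (C : 'M[R]_(K, m.+1)), beta *m C = 0 -> forall y : R,
    \sum_i beta 0 i * (\sum_(j < m.+1) C i j * (y ^+ (m - j) * (-1) ^+ j *+ 'C(m, j))) = 0.
  move=> C hC y.
  under eq_bigr do rewrite mulr_sumr.
  rewrite exchange_big /= big1 // => j _.
  rewrite (_ : \sum_i _ = (\sum_i beta 0 i * C i j) * (y ^+ (m - j) * (-1) ^+ j *+ 'C(m, j))); last first.
    by rewrite mulr_suml; apply: eq_bigr => i _; rewrite mulrA.
  have := congr1 (fun M : 'M[R]_(1, m.+1) => M 0 j) hC; rewrite !mxE => ->.
  by rewrite mul0r.
have bnd : forall i, `|beta 0 i| <= 1.
  move=> i; rewrite bE normrM normfV normr_id ler_pdivrMl // mulr1; exact: Hi1.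
have m1 := m1_neq.
exists beta; split; [exists i1|split; [exact: bnd|split]].
- by rewrite bE normrM normfV normr_id mulVf // gt_eqF.
- move=> x hx.
  case: (lerP 0 x) => x0.
  + rewrite -[RHS](mom A hAB.1 x); apply: eq_bigr => i _; congr (_ * _).
    rewrite /reluP.
    case: (hw i) => hwi; rewrite hwi.
    * rewrite mul1r max_r; last first.
        have := hb i; rewrite ger0_norm // in hx; move: (ler_norm (bb i)); lra.
      rewrite (_ : x - bb i = x + - bb i) // exprDn; apply: eq_bigr => j _.
      rewrite !mxE hwi eqxx mul1r (exprNn (bb i)) mulrnAr; congr (_ *+ _).
      by rewrite [LHS]mulrA [LHS]mulrC.
    * rewrite max_l; last first.
        have := hb i; rewrite ger0_norm // in hx; move: (ler_norm (- bb i)); rewrite normrN; lra.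
      rewrite expr0n /= (negbTE (lt0n_neq0 hm)) /= big1 // => j _.
      by rewrite !mxE hwi m1 !mul0r.
  + rewrite -[RHS](mom B hAB.2 (- x)); apply: eq_bigr => i _; congr (_ * _).
    rewrite /reluP.
    case: (hw i) => hwi; rewrite hwi.
    * rewrite mul1r max_l; last first.
        have := hb i; rewrite ltr0_norm // in hx; move: (ler_norm (- bb i)); rewrite normrN; lra.
      rewrite expr0n /= (negbTE (lt0n_neq0 hm)) /= big1 // => j _.
      by rewrite !mxE hwi eqxx !mul0r.
    * rewrite max_r; last first.
        have := hb i; rewrite ltr0_norm // in hx; move: (ler_norm (bb i)); lra.
      rewrite (_ : -1 * x - bb i = - x + - bb i); last ring.
      rewrite exprDn; apply: eq_bigr => j _.
      rewrite !mxE hwi m1 mul1r (exprNn (bb i)) mulrnAr; congr (_ *+ _).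
      by rewrite [LHS]mulrA [LHS]mulrC.
- move=> x hx.
  apply: le_trans (ler_norm_sum _ _ _) _.
  rewrite -[X in X%:R]card_ord -sum1_card natr_sum mulr_suml.
  apply: ler_sum => i _.
  rewrite normrM; apply: le_trans (ler_wpM2r (normr_ge0 _) (bnd i)) _; rewrite !mul1r.
  have /andP [h1 h2] := relu_bound m (ww i * x - bb i).
  have hz : `|ww i * x - bb i| <= 2 * del.
    apply: le_trans (ler_normB _ _) _; rewrite normrM.
    have -> : `|ww i| = 1 by case: (hw i) => ->; rewrite ?normrN normr1.
    by rewrite mul1r; move: (hb i); lra.
  rewrite ger0_norm //; apply: le_trans h2 _.
  apply: lerXn2r; try exact: hz; rewrite nnegrE ?normr_ge0 //.
  by move: (hb i) (normr_ge0 (bb i)) hx; lra.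
Qed.
End Mom.

Section A.
Variable R : realType.
Notation mu := (@lebesgue_measure R).
Notation I11 := (`[(-1 : R), 1]%classic).

Lemma cont_relu (a c : R) (m : nat) : continuous (fun x : R => reluP m (a * x - c)).
Proof.
move=> x; rewrite /reluP.
apply: (@continuous_comp _ _ _ (fun x => Num.max 0 (a * x - c)) (fun y => y ^+ m)).
  apply: (@continuous_max R R (fun=> 0) (fun x => a * x - c)).
    exact: cst_continuous.
  apply: continuousB; last exact: cst_continuous.
  apply: continuousM; first exact: cst_continuous.
  done.
exact: exprn_continuous.
Qed.

Definition intg (f : R -> R) := mu.-integrable I11 (EFin \o f).

Lemma cont_int (f : R -> R) : continuous f -> intg f.
Proof.
move=> cf; apply: continuous_compact_integrable; first exact: segment_compact.
by apply: continuous_subspaceT.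
Qed.

Lemma mI11 : measurable I11.
Proof. exact: measurable_itv. Qed.

Lemma Rint_sum (I : Type) (s : seq I) (f : I -> R -> R) :
  (forall i, intg (f i)) ->
  intg (fun x => \sum_(i <- s) f i x) /\
  \int[mu]_(x in I11) (\sum_(i <- s) f i x) = \sum_(i <- s) \int[mu]_(x in I11) f i x.
Proof.
move=> hf; elim: s => [|a s [IH1 IH2]].
  split.
    have -> : (fun x => \sum_(i <- [::]) f i x) = fun=> 0.
      by apply: funext => x; rewrite big_nil.
    by apply: cont_int; exact: cst_continuous.
  under eq_Rintegral do rewrite big_nil.
  by rewrite big_nil Rintegral_cst ?mI11 // mul0r.
have hi : intg (fun x => f a x + \sum_(i <- s) f i x).
  rewrite /intg; have -> : (EFin \o (fun x => f a x + \sum_(i <- s) f i x)) =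
      (EFin \o f a) \+ (EFin \o (fun x => \sum_(i <- s) f i x)) by [].
  by apply: integrableD; [exact: mI11|exact: hf|exact: IH1].
split.
  have -> : (fun x => \sum_(i <- a :: s) f i x) = (fun x => f a x + \sum_(i <- s) f i x).
    by apply: funext => x; rewrite big_cons.
  exact: hi.
under eq_Rintegral do rewrite big_cons.
rewrite big_cons RintegralD ?mI11 //; last exact: hf.
by congr (_ + _); exact: IH2.
Qed.

Definition hfun (p k : nat) (wi bi : R) (x : R) := wi ^+ k * dsigma p k (wi * x - bi).

Lemma cont_hfun p k wi bi : continuous (hfun p k wi bi).
Proof.
move=> x; rewrite /hfun /dsigma.
apply: (@continuousM R R (fun=> wi ^+ k) (fun x => p`!%:R / (p - k)`!%:R * reluP (p - k) (wi * x - bi))); first exact: cst_continuous.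
apply: (@continuousM R R (fun=> p`!%:R / (p - k)`!%:R) (fun x => reluP (p - k) (wi * x - bi))); first exact: cst_continuous.
exact: cont_relu.
Qed.

Lemma quad_form p k N (w b : 'I_N -> R) (u : 'rV[R]_N) :
  (u *m gram p k w b *m u^T) 0 0 =
  \int[mu]_(x in I11) (\sum_i u 0 i * hfun p k (w i) (b i) x) ^+ 2.
Proof.
have ci : forall i j, intg (fun x => u 0 i * u 0 j * (hfun p k (w i) (b i) x * hfun p k (w j) (b j) x)).
  move=> i j; apply: cont_int => x.
  apply: (@continuousM R R (fun=> u 0 i * u 0 j) (fun x => hfun p k (w i) (b i) x * hfun p k (w j) (b j) x)); first exact: cst_continuous.
  by apply: (@continuousM R R (hfun p k (w i) (b i)) (hfun p k (w j) (b j))); apply: cont_hfun.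
rewrite mxE.
under eq_bigr do rewrite mxE.
transitivity (\sum_j \sum_i \int[mu]_(x in I11)
   (u 0 i * u 0 j * (hfun p k (w i) (b i) x * hfun p k (w j) (b j) x))).
  apply: eq_bigr => j _; rewrite mulr_suml; apply: eq_bigr => i _.
  rewrite !mxE RintegralZl; last 2 first.
    exact: mI11.
    apply: cont_int => x; apply: (@continuousM R R (hfun p k (w i) (b i)) (hfun p k (w j) (b j))); apply: cont_hfun.
  rewrite mulrAC; congr (_ * _).
  apply: eq_Rintegral => x _; rewrite /hfun; ring.
have [_ H1] := @Rint_sum _ (index_enum 'I_N) (fun j x => \sum_i
   (u 0 i * u 0 j * (hfun p k (w i) (b i) x * hfun p k (w j) (b j) x)))
   (fun j => (@Rint_sum _ (index_enum 'I_N) _ (fun i => ci i j)).1).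
under eq_bigr do rewrite -(@Rint_sum _ (index_enum 'I_N) _ (fun i => ci i _)).2.
rewrite -H1.
apply: eq_Rintegral => x _.
rewrite expr2 mulr_suml; apply: eq_bigr => i _; rewrite mulr_sumr.
apply: eq_bigr => j _; ring.
Qed.

Lemma int_lb (g : R -> R) (a b K : R) : continuous g -> (forall x, 0 <= g x) ->
  -1 <= a -> b <= 1 -> a <= b -> (forall x, a <= x <= b -> K <= g x) -> 0 <= K ->
  K * (b - a) <= \int[mu]_(x in I11) g x.
Proof.
move=> cg g0 ha hb hab hK K0.
have ig := cont_int _ cg.
rewrite -lee_fin /Rintegral fineK; last exact: integrable_fin_num.
apply: (@le_trans _ _ (\int[mu]_(x in `[a, b]) (EFin \o g) x)%E); last first.
  apply: (@ge0_subset_integral _ _ _ mu `[a, b] I11 (measurable_itv _) (measurable_itv _) (EFin \o g)).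
  - by apply/measurable_realfun.measurable_EFinP; apply: measurable_funTS; exact: measurable_realfun.continuous_measurable_fun.
  - by move=> x _; rewrite /= lee_fin.
  - by move=> x /=; rewrite !in_itv /= => /andP [h1 h2]; apply/andP; split; lra.
apply: (@le_trans _ _ (\int[mu]_(x in `[a, b]) (cst K%:E) x)%E).
  rewrite integral_cst; last exact: measurable_itv.
  set M := (X in (_ <= _ * X)%E).
  have hm : M = (b - a)%:E.
    rewrite /M /= lebesgue_measure_itv /= lte_fin.
    case: ltP => h; first by rewrite -EFinD.
    rewrite (_ : b = a); first by rewrite subrr.
    by apply/eqP; rewrite eq_le h hab.
  by rewrite hm -EFinM.
apply: (@ge0_le_integral _ _ _ mu `[a, b] (measurable_itv _) (cst K%:E) (EFin \o g)).
- by move=> x _; rewrite /= lee_fin.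
- exact: measurable_cst.
- by apply/measurable_realfun.measurable_EFinP; apply: measurable_funTS; exact: measurable_realfun.continuous_measurable_fun.
- by move=> x /=; rewrite in_itv /= lee_fin => hx; apply: hK.
Qed.

Lemma int_ub (F : R -> R) (del B : R) : continuous F -> 0 <= del -> 0 <= B ->
  (forall x, del < `|x| -> F x = 0) -> (forall x, `|x| <= del -> F x ^+ 2 <= B) ->
  \int[mu]_(x in I11) (F x ^+ 2) <= B * (2 * del).
Proof.
move=> cF d0 B0 hz hb.
have cF2 : continuous (fun x => F x ^+ 2).
  move=> x; apply: (@continuous_comp _ _ _ F (fun y => y ^+ 2)); first exact: cF.
  exact: exprn_continuous.
have ig := cont_int _ cF2.
rewrite -lee_fin /Rintegral fineK; last exact: integrable_fin_num.
set A := `[- del, del]%classic.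
have mA : measurable A by exact: measurable_itv.
apply: (@le_trans _ _ (\int[mu]_(x in I11) (B * \1_A x)%:E)%E).
  apply: (@ge0_le_integral _ _ _ mu I11 mI11 (EFin \o (fun x => F x ^+ 2)) (fun x => (B * \1_A x)%:E)).
  - by move=> x _; rewrite /= lee_fin sqr_ge0.
  - by apply/measurable_realfun.measurable_EFinP; apply: measurable_funTS; exact: measurable_realfun.continuous_measurable_fun.
  - apply/measurable_realfun.measurable_EFinP; apply: measurable_realfun.measurable_funM; first exact: measurable_cst.
    exact: measurable_realfun.measurable_indic.
  - move=> x _ /=; rewrite lee_fin /indic /=.
    case: (lerP `|x| del) => hx.
      have -> : x \in A by rewrite inE /A /= in_itv /= -ler_norml.
      by rewrite mulr1 hb.
    by rewrite hz // expr0n /= mulr_ge0 // ler0n.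
rewrite (@integralZl_indic _ _ _ mu I11 mI11 (fun=> A)) //.
rewrite (@integral_indic _ _ _ mu I11 mI11 A mA).
rewrite EFinM; apply: lee_wpmul2l; first by rewrite lee_fin.
apply: (@le_trans _ _ (mu A)); first exact: measureIl.
rewrite /A lebesgue_measure_itv /= lte_fin.
case: ltP => h; first by rewrite -EFinD lee_fin; lra.
by rewrite lee_fin; lra.
by move=> hB; exfalso; lra.
Qed.
End A.


Section Main.
Variable R : realType.
Notation mu := (@lebesgue_measure R).
Notation I11 := (`[(-1 : R), 1]%classic).

Lemma cont_sum (I : Type) (s : seq I) (f : I -> R -> R) :
  (forall i, continuous (f i)) -> continuous (fun x => \sum_(i <- s) f i x).
Proof.
move=> hf; elim: s => [|a s IH].
  have -> : (fun x => \sum_(i <- [::]) f i x) = fun=> 0.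
    by apply: funext => x; rewrite big_nil.
  exact: cst_continuous.
have -> : (fun x => \sum_(i <- a :: s) f i x) = (fun x => f a x + \sum_(i <- s) f i x).
  by apply: funext => x; rewrite big_cons.
move=> x; apply: (@continuousD _ _ _ (f a) (fun x => \sum_(i <- s) f i x)).
  exact: hf.
exact: IH.
Qed.

Lemma norm_row n (u : 'rV[R]_n) : (u *m u^T) 0 0 = \sum_i u 0 i ^+ 2.
Proof. by rewrite mxE; apply: eq_bigr => i _; rewrite mxE expr2. Qed.

Lemma center_bound (N n i K : nat) (bn : R) : (0 < N)%N -> n = (N %/ 2 + i)%N -> (i < K)%N ->
  `|bn - (-1 + 2 * n%:R / N%:R)| <= 1 / N%:R -> `|bn| <= (2 * K)%:R / N%:R.
Proof.
move=> N0 hn hi hb.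
have Np : 0 < N%:R :> R by rewrite ltr0n.
have hN : N%:R = 2 * (N %/ 2)%:R + (N %% 2)%:R :> R.
  by rewrite {1}(divn_eq N 2) natrD natrM mulrC.
have hr : (N %% 2)%:R <= 1 :> R.
  by rewrite (_ : 1 = 1%:R) // ler_nat -ltnS ltn_pmod.
have hi' : i%:R + 1 <= K%:R :> R by rewrite -[1]/(1%:R) -natrD ler_nat addn1.
set t := (-1 + 2 * n%:R / N%:R : R).
have ht : t * N%:R = 2 * i%:R - (N %% 2)%:R.
  rewrite /t mulrDl mulN1r mulfVK ?gt_eqF // hn natrD {1}hN; ring.
have hA : `|bn - t| * N%:R <= 1 by rewrite -ler_pdivlMr.
have hB : `|t| * N%:R <= 2 * i%:R + 1.
  rewrite -(ger0_norm (ltW Np)) -normrM ht ler_norml; apply/andP; split.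
    by move: (ler0n R i) (ler0n R (N %% 2)) hr; lra.
  by move: (ler0n R i) (ler0n R (N %% 2)) hr; lra.
have hC : `|bn| <= `|bn - t| + `|t| by have := ler_normD (bn - t) t; rewrite subrK.
rewrite natrM ler_pdivlMr //.
apply: le_trans (ler_wpM2r (ltW Np) hC) _.
rewrite mulrDl; move: hA hB hi'; lra.
Qed.

Lemma gram_sym p k N (w b : 'I_N -> R) : (gram p k w b)^T = gram p k w b.
Proof. by apply/matrixP => i j; rewrite !mxE; apply: eq_Rintegral => x _; ring. Qed.

Lemma gram_psd p k N (w b : 'I_N -> R) (u : 'rV_N) : 0 <= (u *m gram p k w b *m u^T) 0 0.
Proof. by rewrite quad_form; apply: Rintegral_ge0 => x _; exact: sqr_ge0. Qed.

Lemma w2k (wi : R) k : wi = 1 \/ wi = -1 -> (wi ^+ k) ^+ 2 = 1.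
Proof. by move=> h; rewrite exprAC; case: h => ->; rewrite ?sqrrN expr1n expr1n. Qed.

Lemma hfun_sq p k (wi bi x : R) : wi = 1 \/ wi = -1 ->
  hfun R p k wi bi x ^+ 2 = (p`!%:R / (p - k)`!%:R * reluP (p - k) (wi * x - bi)) ^+ 2.
Proof. by move=> h; rewrite /hfun /dsigma exprMn w2k // mul1r. Qed.

Lemma relu_ge m (z a : R) : 0 <= a -> a <= z -> a ^+ m <= reluP m z.
Proof.
move=> a0 az; rewrite /reluP; apply: lerXn2r; rewrite ?nnegrE //.
  by rewrite le_max lexx.
by rewrite le_max az orbT.
Qed.

Lemma cpos p k : 0 < p`!%:R / (p - k)`!%:R :> R.
Proof. by rewrite divr_gt0 // ltr0n fact_gt0. Qed.

Lemma lower_G p k N (w b : 'I_N -> R) (i : 'I_N) :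
  (w i = 1 \/ w i = -1) -> `|b i + 1| <= 1 / 2 ->
  exists2 a, eigenvalue (gram p k w b) a &
    (p`!%:R / (p - k)`!%:R * (1 / 2) ^+ (p - k)) ^+ 2 <= a.
Proof.
move=> hw hb.
set c := p`!%:R / (p - k)`!%:R : R.
have c0 : 0 < c by exact: cpos.
set u : 'rV[R]_N := delta_mx 0 i.
have hsum : forall x, \sum_j u 0 j * hfun R p k (w j) (b j) x = hfun R p k (w i) (b i) x.
  move=> x; rewrite (bigD1 i) //= big1 => [|j hj]; first by rewrite !mxE !eqxx mul1r addr0.
  by rewrite !mxE (negbTE hj) andbF mul0r.
have hn : (u *m u^T) 0 0 = 1.
  rewrite norm_row (bigD1 i) //= big1 => [|j hj]; first by rewrite !mxE !eqxx expr1n addr0.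
  by rewrite !mxE (negbTE hj) andbF expr0n.
have u0 : u != 0 by apply/negP => /eqP h; move: hn; rewrite h mul0mx mxE => /eqP; rewrite eq_sym oner_eq0.
have [_ [a [ha hq]]] := real_rayleigh _ _ _ (gram_sym p k N w b) u u0.
exists a => //; rewrite hn mulr1 quad_form in hq; apply: le_trans hq.
under eq_Rintegral do rewrite hsum.
have hb1 : -3/2 <= b i <= -1/2.
  by move: hb; rewrite ler_norml => /andP [h1 h2]; apply/andP; split; lra.
have K0 : 0 <= (c * (1 / 2) ^+ (p - k)) ^+ 2 by apply: sqr_ge0.
have cg : continuous (fun x => hfun R p k (w i) (b i) x ^+ 2).
  move=> x; apply: (@continuous_comp _ _ _ (hfun R p k (w i) (b i)) (fun y => y ^+ 2)).
    exact: cont_hfun.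
  exact: exprn_continuous.
have key : forall x, 1 / 2 <= w i * x - b i ->
    (c * (1 / 2) ^+ (p - k)) ^+ 2 <= hfun R p k (w i) (b i) x ^+ 2.
  move=> x hx; rewrite hfun_sq //; apply: lerXn2r; rewrite ?nnegrE.
  - by apply: mulr_ge0; [exact: ltW | apply: exprn_ge0; lra].
  - by apply: mulr_ge0; [exact: ltW | rewrite /reluP exprn_ge0 // le_max lexx].
  - by apply: ler_wpM2l; [exact: ltW | apply: relu_ge; lra].
case: hw => hwi.
- rewrite -[X in X <= _]mulr1 -[X in _ * X <= _](subr0 1).
  apply: (int_lb _ _ 0 1 _ cg); [by move=> x; exact: sqr_ge0|lra|lra|lra| |exact: K0].
  by move=> x /andP [h1 h2]; apply: key; rewrite hwi; lra.
- rewrite -[X in X <= _]mulr1 -[X in _ * X <= _](opprK 1) -[X in _ * X <= _]add0r.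
  apply: (int_lb _ _ (-1) 0 _ cg); [by move=> x; exact: sqr_ge0|lra|lra|lra| |exact: K0].
  by move=> x /andP [h1 h2]; apply: key; rewrite hwi; lra.
Qed.

Lemma idx_lt {n0 K N} (h : (n0 + K <= N)%N) (i : 'I_K) : (n0 + i < N)%N.
Proof. by apply: leq_trans h; rewrite ltn_add2l. Qed.

Definition idx {n0 K N} (h : (n0 + K <= N)%N) (i : 'I_K) : 'I_N := Ordinal (idx_lt h i).

Lemma idx_eq {n0 K N} (h : (n0 + K <= N)%N) (i j : 'I_K) : (idx h i == idx h j) = (i == j).
Proof. by rewrite -val_eqE /= eqn_add2l val_eqE. Qed.

Lemma upper_G p k N (w b : 'I_N -> R) (hk : (k < p)%N) n0
  (h : (n0 + ((p - k).+1 + (p - k).+1).+1 <= N)%N) (del : R) (d0 : 0 <= del)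
  (hw : forall n, w n = 1 \/ w n = -1) (hb : forall i, `|b (idx h i)| <= del) :
  exists2 a, eigenvalue (gram p k w b) a &
    a <= (p`!%:R / (p - k)`!%:R * (((p - k).+1 + (p - k).+1).+1%:R * (2 * del) ^+ (p - k))) ^+ 2 * (2 * del).
Proof.
set m := (p - k)%N.
have hm : (0 < m)%N by rewrite subn_gt0.
set c := p`!%:R / (p - k)`!%:R : R.
have c0 : 0 < c by exact: cpos.
have [beta [[i1 hi1] [bnd [hz hbd]]]] := moment_vec R m hm (fun i => w (idx h i)) (fun i => b (idx h i)) del (fun i => hw _) hb.
set u : 'rV[R]_N := \row_n \sum_(i | idx h i == n) beta 0 i * w n ^+ k.
set Fb := fun x => \sum_i beta 0 i * reluP m (w (idx h i) * x - b (idx h i)).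
have E : forall bt W cc r : R, W * W = 1 -> bt * W * (W * (cc * r)) = cc * (bt * r).
  move=> bt W cc r hW.
  rewrite (_ : bt * W * (W * (cc * r)) = bt * (W * W) * (cc * r)); last by ring.
  by rewrite hW; ring.
have hsum : forall x, \sum_n u 0 n * hfun R p k (w n) (b n) x = c * Fb x.
  move=> x.
  under eq_bigr do rewrite mxE mulr_suml.
  rewrite /Fb mulr_sumr.
  under eq_bigr do rewrite big_mkcond /=.
  rewrite exchange_big /=; apply: eq_bigr => i _.
  rewrite -big_mkcond /= (big_pred1 (idx h i)) => [|n]; last by rewrite /= eq_sym.
  rewrite /hfun /dsigma -/m -/c; apply: E.
  by rewrite -expr2 w2k.
have hn : 1 <= (u *m u^T) 0 0.
  rewrite norm_row; apply: le_trans (sq_le_sum _ _ u (idx h i1)).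
  rewrite mxE (big_pred1 i1) => [|i]; last by rewrite /= idx_eq.
  by rewrite exprMn w2k // mulr1 -real_normK ?num_real // hi1 expr1n.
have u0 : u != 0.
  by apply/negP => /eqP h0; move: hn; rewrite h0 mul0mx mxE ler10.
set Bd := (((p - k).+1 + (p - k).+1).+1%:R * (2 * del) ^+ (p - k)) : R.
have hq : (u *m gram p k w b *m u^T) 0 0 <= (c * Bd) ^+ 2 * (2 * del).
  rewrite quad_form; under eq_Rintegral do rewrite hsum.
  apply: int_ub.
  - move=> x; apply: (@continuousM R R (fun=> c) Fb); first exact: cst_continuous.
    apply: cont_sum => i y.
    apply: (@continuousM R R (fun=> beta 0 i) (fun y => reluP m (w (idx h i) * y - b (idx h i)))).
      exact: cst_continuous.
    exact: cont_relu.
  - exact: d0.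
  - exact: sqr_ge0.
  - by move=> x hx; rewrite /Fb hz // mulr0.
  - move=> x hx; rewrite -real_normK ?num_real //; apply: lerXn2r; rewrite ?nnegrE //.
    + by apply: mulr_ge0; [exact: ltW | rewrite /Bd mulr_ge0 // exprn_ge0 //; lra].
    + by rewrite normrM gtr0_norm //; apply: ler_wpM2l; [exact: ltW | exact: hbd].
have [[a [ha hq']] _] := real_rayleigh _ _ _ (gram_sym p k N w b) u u0.
exists a => //.
have [a0 _] := eig_props _ _ _ (gram_psd p k N w b) a ha.
apply: le_trans hq; apply: le_trans hq'.
by rewrite ler_peMr.
Qed.

Lemma alg_id (c K t N : R) m : N != 0 ->
  (c * (K * (t / N) ^+ m)) ^+ 2 * (t / N) = ((c * (K * t ^+ m)) ^+ 2 * t) / N ^+ (1 + 2 * m).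
Proof.
move=> N0; rewrite (_ : (1 + 2 * m)%N = (m * 2).+1); last by rewrite addnC mulnC addn1.
rewrite [N ^+ _]exprS [N ^+ (m * 2)]exprM expr_div_n.
by field; rewrite ?expf_neq0.
Qed.
End Main.

From mathcomp Require Import zify.


Theorem theorem2 (R : realType) (p k : nat) (hp : (1 <= p)%N) (hk : (k < p)%N)
  (w b : forall N : nat, 'I_N -> R)
  (hw : forall (N : nat) (i : 'I_N), w N i = 1 \/ w N i = -1)
  (hb : forall eps : R, 0 < eps -> exists N0 : nat, forall N : nat, (N0 <= N)%N ->
          forall n : 'I_N, `| b N n - (-1 + 2 * (n%:R) / N%:R) | <= eps / N%:R) :
  exists C : R, 0 < C /\ exists N0 : nat, forall N : nat, (N0 <= N)%N ->
    ((C * N%:R ^+ (1 + 2 * (p - k)))%:E <= cond_number (gram p k (w N) (b N)))%E.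
Proof.
set m := (p - k)%N.
have hm : (0 < m)%N by rewrite subn_gt0.
set K := (m.+1 + m.+1).+1.
set c := p`!%:R / m`!%:R : R.
have c0 : 0 < c by exact: cpos.
set L := (c * (1 / 2) ^+ m) ^+ 2.
set t := 4 * K%:R : R.
have t0 : 0 < t by rewrite mulr_gt0 // ltr0n.
set D := (c * (K%:R * t ^+ m)) ^+ 2 * t.
have L0 : 0 < L by rewrite exprn_gt0 // mulr_gt0 // exprn_gt0 //; lra.
have D0 : 0 < D by rewrite mulr_gt0 // exprn_gt0 // mulr_gt0 // mulr_gt0 ?ltr0n // exprn_gt0.
exists (L / D); split; first exact: divr_gt0.
have [N0 hN0] := hb 1 ltr01.
exists (N0 + 2 * K + 2)%N => N hN.
have Npos : (0 < N)%N by lia.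
have NR : 0 < N%:R :> R by rewrite ltr0n.
set G := gram p k (w N) (b N).
have hbN : forall n : 'I_N, `|b N n - (-1 + 2 * n%:R / N%:R)| <= 1 / N%:R.
  by apply: hN0; lia.
set i00 : 'I_N := Ordinal Npos.
have hb0 : `|b N i00 + 1| <= 1 / 2.
  have := hbN i00; rewrite /= mulr0 mul0r addr0 opprK => h.
  apply: le_trans h _.
  have N2 : (2 : R) <= N%:R by rewrite ler_nat; lia.
  rewrite ler_pdivrMr //; lra.
have [a1 ha1 hL] := lower_G R p k N (w N) (b N) i00 (hw N i00) hb0.
have h : (N %/ 2 + K <= N)%N by lia.
set del := (2 * K)%:R / N%:R : R.
have d0 : 0 <= del by rewrite divr_ge0 ?ler0n.
have hbi : forall i, `|b N (idx h i)| <= del.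
  move=> i; apply: (center_bound R N (idx h i) i K (b N (idx h i)) Npos) => //.
have [a2 ha2 hU] := upper_G R p k N (w N) (b N) hk (N %/ 2) h del d0 (hw N) hbi.
have hdel : 2 * del = t / N%:R by rewrite /del /t natrM; ring.
rewrite hdel (alg_id R) ?gt_eqF // -/D in hU.
set S := [set a : R | eigenvalue G a].
have props : forall a, S a -> 0 <= a /\ a <= \sum_i \sum_j `|G i j|.
  by move=> a; apply: eig_props; exact: gram_psd R p k N (w N) (b N).
have hinf0 : 0 <= inf S.
  by apply: lb_le_inf; [exists a1 | move=> a /props []].
have hinf : inf S <= a2.
  by apply: ge_inf => //; exists 0 => a /props [].
have hsup : a1 <= sup S.
  apply: sup_upper_bound => //; split; first by exists a1.
  by exists (\sum_i \sum_j `|G i j|) => a /props [].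
rewrite /cond_number /lambda_min /lambda_max -/S.
case: ifP => h0; first by rewrite leey.
have hpos : 0 < inf S by rewrite lt_def h0 hinf0.
rewrite lee_fin ler_pdivlMr //.
have NeR : 0 < N%:R ^+ (1 + 2 * m) :> R by rewrite exprn_gt0.
apply: le_trans hsup; apply: le_trans hL.
apply: (@le_trans _ _ (L / D * N%:R ^+ (1 + 2 * m) * (D / N%:R ^+ (1 + 2 * m)))).
  apply: ler_wpM2l; first by rewrite mulr_ge0 // ?divr_ge0 // ?ltW.
  exact: le_trans hinf hU.
rewrite mulrA -[L / D * _ * D]mulrA [_ * D]mulrC mulrA -mulrA mulfV ?gt_eqF // mulr1.
by rewrite mulfVK ?gt_eqF.
Qed.
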